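(* Let $(M,d)$ be a pointed metric space. The space $\mathrm{Lip}_0(M)$ has the LD2P if and only if for every optimal $\mu\in ba(\widetilde M)$ with $\|\mu\|=1$ and every $\gamma\in(0,1)$ there exist $A\subseteq\widetilde M$ with $\mu(A)\ge\gamma$, functions $f,g\in B_{\mathrm{Lip}_0(M)}$, and $u,v\in M$ with $u\ne v$ such that $f(m_{x,y})\ge\gamma$ and $g(m_{x,y})\ge\gamma$ for all $(x,y)\in A$, and for all $x,y\in\pi(A)$, \[\max\{f(x)-f(y),\,g(y)-g(x)\}+\gamma d(u,v)\le d(x,u)+d(y,v).\]
   Context: $M$ has base point $0$; $\mathrm{Lip}_0(M)$ is the real Banach space of Lipschitz $f\colon M\to\mathbb R$ with $f(0)=0$, normed by the best Lipschitz constant, with unit ball $B_{\mathrm{Lip}_0(M)}$. A Banach space $X$ has the LD2P (local diameter 2 property) if every slice $\{x\in B_X: x^*(x)>1-\alpha\}$ ($\|x^*\|=1$, $\alpha>0$) of its unit ball has diameter $2$. $\widetilde M=\{(x,y)\in M\times M:x\ne y\}$, $f(m_{x,y})=(f(x)-f(y))/d(x,y)$, and $\pi(A)=\{x\in M:\exists y,\ (x,y)\in A\text{ or }(y,x)\in A\}$. $ba(\widetilde M)$ is the Banach space of bounded finitely additive signed measures on the power set of $\widetilde M$ with norm $|\mu|(\widetilde M)$. $\Phi f(x,y)=(f(x)-f(y))/d(x,y)$ and $(\Phi^*\mu)(f)=\int_{\widetilde M}\Phi f\,d\mu$. $\mu$ is optimal if positive and $\|\Phi^*\mu\|=\|\mu\|$.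 *)

(* Defs.v *)
From HB Require Import structures.
From mathcomp Require Import all_boot all_order all_algebra.
From mathcomp Require Import all_classical all_reals.
Set Implicit Arguments. Unset Strict Implicit. Unset Printing Implicit Defensive.
Import Order.TTheory GRing.Theory Num.Theory.
Local Open Scope classical_set_scope.
Local Open Scope ring_scope.

Section Defs.
Variables (R : realType) (M : Type) (d : M -> M -> R) (z : M).

Definition is_metric : Prop :=
  (forall x y, 0 <= d x y) /\ (forall x y, d x y = 0 <-> x = y) /\
  (forall x y, d x y = d y x) /\ (forall x y w, d x w <= d x y + d y w).

Definition lipnorm (f : M -> R) : R :=
  sup [set r | exists x y, x <> y /\ r = `|f x - f y| / d x y].

Definition Lip0 (f : M -> R) : Prop :=
  f z = 0 /\ exists L : R, forall x y, `|f x - f y| <= L * d x y.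

Definition BLip0 (f : M -> R) : Prop := Lip0 f /\ lipnorm f <= 1.

Definition is_dual (phi : (M -> R) -> R) : Prop :=
  (forall f g a b, Lip0 f -> Lip0 g ->
     phi (fun x => a * f x + b * g x) = a * phi f + b * phi g) /\
  exists C : R, forall f, Lip0 f -> `|phi f| <= C * lipnorm f.

Definition dualnorm (phi : (M -> R) -> R) : R :=
  sup [set `|phi f| | f in BLip0].

Definition slice (phi : (M -> R) -> R) (alpha : R) : set (M -> R) :=
  [set f | BLip0 f /\ 1 - alpha < phi f].

Definition diam_Lip (S : set (M -> R)) : R :=
  sup [set r | exists f g, S f /\ S g /\ r = lipnorm (fun x => f x - g x)].

Definition LD2P : Prop :=
  forall phi, is_dual phi -> dualnorm phi = 1 ->
  forall alpha : R, 0 < alpha -> diam_Lip (slice phi alpha) = 2.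

Definition Mt := {p : M * M | p.1 <> p.2}.

Definition Phi (f : M -> R) (p : Mt) : R :=
  (f (sval p).1 - f (sval p).2) / d (sval p).1 (sval p).2.

Definition pi_set (A : set Mt) : set M :=
  [set x | exists y, exists2 p, A p & (sval p = (x, y) \/ sval p = (y, x))].

Definition is_ba (mu : set Mt -> R) : Prop :=
  (forall A B, A `&` B = set0 -> mu (A `|` B) = mu A + mu B) /\
  exists C : R, forall A, `|mu A| <= C.

Definition positive_ba (mu : set Mt -> R) : Prop := forall A, 0 <= mu A.

(* s is a finite partition of Mt (empty cells allowed) *)
Definition fin_partition (s : seq (set Mt)) : Prop :=
  (forall i j, (i < size s)%N -> (j < size s)%N -> i <> j ->
     nth set0 s i `&` nth set0 s j = set0) /\
  (forall p, exists i, (i < size s)%N /\ nth set0 s i p).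

Definition ba_norm (mu : set Mt -> R) : R :=
  sup [set \sum_(A <- s) `|mu A| | s in fin_partition].

(* I is the integral of the bounded function g w.r.t. mu: limit of
   Riemann sums over tagged finite partitions of small oscillation.
   v i = g(t_i) for a tag t_i in the i-th cell (arbitrary if the cell is empty,
   where mu vanishes). *)
Definition is_ba_integral (mu : set Mt -> R) (g : Mt -> R) (I : R) : Prop :=
  forall e : R, 0 < e -> exists2 delta : R, 0 < delta &
  forall (s : seq (set Mt)) (v : seq R),
    fin_partition s -> size v = size s ->
    (forall i, (i < size s)%N -> forall p q, nth set0 s i p -> nth set0 s i q ->
        `|g p - g q| <= delta) ->
    (forall i, (i < size s)%N ->
        nth set0 s i = set0 \/ exists2 p, nth set0 s i p & nth 0 v i = g p) ->
    `|\sum_(i < size s) nth 0 v i * mu (nth set0 s i) - I| <= e.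

Definition ba_integral (mu : set Mt -> R) (g : Mt -> R) : R :=
  xget 0 [set I | is_ba_integral mu g I].

Definition Phi_star (mu : set Mt -> R) : (M -> R) -> R :=
  fun f => ba_integral mu (Phi f).

Definition optimal (mu : set Mt -> R) : Prop :=
  positive_ba mu /\ dualnorm (Phi_star mu) = ba_norm mu.

End Defs.

(* Main.v *)
Require Import Defs.
From mathcomp Require Import all_boot all_order all_algebra.
From mathcomp Require Import all_classical all_reals.
From mathcomp Require Import ring lra zify.
Import Order.TTheory GRing.Theory Num.Theory.
Local Open Scope classical_set_scope.
Local Open Scope ring_scope.
Set Implicit Arguments. Unset Strict Implicit. Unset Printing Implicit Defensive.

Lemma zero_lim (R : realType) (x K : R) : 0 <= K ->
  (forall e : R, 0 < e -> `|x| <= e * K) -> x = 0.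
Proof.
move=> K0 h; apply/eqP; rewrite -normr_le0.
apply/ler_addgt0Pr => e e0; rewrite add0r.
have K1 : 0 < K + 1 by lra.
have := h (e / (K + 1)) (divr_gt0 e0 K1).
move=> /le_trans; apply.
rewrite mulrAC ler_pdivrMr //; nra.
Qed.

Lemma ge0_lim (R : realType) (x K : R) : 0 <= K ->
  (forall e : R, 0 < e -> - (e * K) <= x) -> 0 <= x.
Proof.
move=> K0 h; apply/ler_addgt0Pr => e e0.
have K1 : 0 < K + 1 by lra.
have := h (e / (K + 1)) (divr_gt0 e0 K1).
have : e / (K + 1) * K <= e.
  by rewrite mulrAC ler_pdivrMr //; nra.
lra.
Qed.

Section Meas.
Variables (R : realType) (M : Type).
Local Notation T := (Mt M).
Implicit Types (mu : set T -> R) (g h : T -> R).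

Definition part n (P : nat -> set T) :=
  (forall i j, (i < n)%N -> (j < n)%N -> i <> j -> P i `&` P j = set0) /\
  (forall p, exists i, (i < n)%N /\ P i p).

Definition fine g (del : R) n (P : nat -> set T) :=
  forall i, (i < n)%N -> forall p q, P i p -> P i q -> `|g p - g q| <= del.

Definition tagok g n (P : nat -> set T) (V : nat -> R) :=
  forall i, (i < n)%N -> P i = set0 \/ exists2 p, P i p & V i = g p.

Definition RS mu n (P : nat -> set T) (V : nat -> R) :=
  \sum_(i < n) V i * mu (P i).

Definition bnd g := exists K, forall p, `|g p| <= K.
Definition posba mu := is_ba mu /\ positive_ba mu.

Lemma ba0 mu : is_ba mu -> mu set0 = 0.
Proof.
move=> [add _]; have e := add set0 set0 (setI0 _).
by apply: (addrI (mu set0)); rewrite addr0 -e setU0.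
Qed.

Lemma ba_sum mu n (Q : nat -> set T) : is_ba mu ->
  (forall i j, (i < n)%N -> (j < n)%N -> i <> j -> Q i `&` Q j = set0) ->
  mu [set p | exists i, (i < n)%N /\ Q i p] = \sum_(i < n) mu (Q i).
Proof.
move=> hba; elim: n => [|n IH] hd.
  rewrite big_ord0 -(ba0 hba); congr mu; rewrite predeqE => p; split => //.
  by case=> i [].
rewrite big_ord_recr /= -IH; last first.
  by move=> i j hi hj; apply: hd; apply: ltnW.
have -> : [set p | exists i, (i < n.+1)%N /\ Q i p] =
  [set p | exists i, (i < n)%N /\ Q i p] `|` Q n.
  rewrite predeqE => p; split.
    case=> i []; rewrite ltnS leq_eqVlt => /orP[/eqP ->|hi] hq; first by right.
    by left; exists i.
  by case=> [[i [hi hq]]|hq]; [exists i; split => //; apply: ltnW|exists n].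
apply hba.1; rewrite predeqE => p; split => // -[[i [hi hq]] hn].
have ne : i <> n by move=> e; move: hi; rewrite e ltnn.
have := hd i n (ltnW hi) (ltnSn n) ne.
by move=> /seteqP[+ _] => /(_ p (conj hq hn)).
Qed.

Lemma ba_part mu n P B : is_ba mu -> part n P ->
  mu B = \sum_(i < n) mu (B `&` P i).
Proof.
move=> hba [hd hc]; rewrite -(@ba_sum mu n (fun i => B `&` P i) hba); last first.
  move=> i j hi hj ne; rewrite predeqE => p; split => // -[[_ h1] [_ h2]].
  by have := hd i j hi hj ne => /seteqP[+ _] => /(_ p (conj h1 h2)).
congr mu; rewrite predeqE => p; split.
  by move=> hB; have [i [hi hp]] := hc p; exists i.
by case=> i [_ []].
Qed.

Lemma posba_mono mu A B : posba mu -> A `<=` B -> mu A <= mu B.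
Proof.
move=> [hba hpos] AB.
have -> : B = A `|` (B `\` A).
  rewrite predeqE => p; split; first by move=> hb; case: (pselect (A p)) => ?; [left|right].
  by case=> [/AB|[]].
rewrite hba.1; first by rewrite lerDl; apply: hpos.
by rewrite predeqE => p; split => // -[? []].
Qed.

Lemma fin_part_part s : fin_partition s -> part (size s) (nth set0 s).
Proof. by []. Qed.

Lemma ba_norm_pos mu : posba mu -> ba_norm mu = mu setT.
Proof.
move=> [hba hpos]; rewrite /ba_norm.
have -> : [set \sum_(A <- s) `|mu A| | s in @fin_partition M] = [set mu setT].
  rewrite predeqE => x; split.
    case=> s hs <-; rewrite /set1 /=.
    rewrite (ba_part setT hba (fin_part_part hs)) (big_nth set0) big_mkord.
    by apply: eq_bigr => i _; rewrite setTI ger0_norm //; apply: hpos.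
  move=> ->; exists [:: setT]; last by rewrite big_seq1 ger0_norm //; apply: hpos.
  split; first by move=> [|i] [|j] //=.
  by move=> p; exists 0%N.
by rewrite sup1.
Qed.

Lemma RS_cmp mu g d1 d2 n P V m Q W : posba mu ->
  part n P -> fine g d1 n P -> tagok g n P V ->
  part m Q -> fine g d2 m Q -> tagok g m Q W ->
  `|RS mu n P V - RS mu m Q W| <= (d1 + d2) * mu setT.
Proof.
move=> [hba hpos] hP fP tP hQ fQ tQ.
have e1 : RS mu n P V = \sum_(i < n) \sum_(j < m) V i * mu (P i `&` Q j).
  by apply: eq_bigr => i _; rewrite -mulr_sumr -(ba_part _ hba hQ).
have e2 : RS mu m Q W = \sum_(i < n) \sum_(j < m) W j * mu (P i `&` Q j).
  rewrite exchange_big; apply: eq_bigr => j _; rewrite -mulr_sumr (ba_part _ hba hP).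
  by congr (_ * _); apply: eq_bigr => i _; rewrite setIC.
have eT : mu setT = \sum_(i < n) \sum_(j < m) mu (P i `&` Q j).
  rewrite (ba_part _ hba hP); apply: eq_bigr => i _; rewrite setTI.
  exact: (ba_part _ hba hQ).
rewrite e1 e2 eT -sumrB mulr_sumr; apply: (le_trans (ler_norm_sum _ _ _)).
apply: ler_sum => i _; rewrite -sumrB mulr_sumr; apply: (le_trans (ler_norm_sum _ _ _)).
apply: ler_sum => j _; rewrite -mulrBl normrM (ger0_norm (hpos _)).
case: (pselect (exists p, (P i `&` Q j) p)) => [[p [pi qj]]|np]; last first.
  have -> : P i `&` Q j = set0 by rewrite predeqE => p; split => // h; apply: np; exists p.
  by rewrite ba0 // !mulr0.
apply: ler_wpM2r; first exact: hpos.
have [e|[p1 h1 ->]] := tP i (ltn_ord i); first by move: pi; rewrite e.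
have [e|[q1 h2 ->]] := tQ j (ltn_ord j); first by move: qj; rewrite e.
have := fP i (ltn_ord i) _ _ h1 pi; have := fQ j (ltn_ord j) _ _ h2 qj.
move=> a b; have := ler_normD (g p1 - g p) (g p - g q1).
have -> : g p1 - g p + (g p - g q1) = g p1 - g q1 by ring.
rewrite (distrC (g q1)) in a; lra.
Qed.

Definition Int mu g := sup [set x | exists del n P V, 0 <= del /\ part n P /\
  fine g del n P /\ tagok g n P V /\ x = RS mu n P V - del * mu setT].

Lemma Int_approx mu g del n P V : posba mu -> 0 <= del ->
  part n P -> fine g del n P -> tagok g n P V ->
  `|Int mu g - RS mu n P V| <= del * mu setT.
Proof.
move=> hmu d0 hP fP tP.
pose E := [set x | exists del n P V, 0 <= del /\ part n P /\
  fine g del n P /\ tagok g n P V /\ x = RS mu n P V - del * mu setT].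
have ub : ubound E (RS mu n P V + del * mu setT).
  move=> x [d' [m [Q [W [d0' [hQ [fQ [tQ ->]]]]]]]].
  have := RS_cmp hmu hQ fQ tQ hP fP tP; rewrite ler_norml => /andP[_].
  lra.
have inE : E (RS mu n P V - del * mu setT).
  by exists del, n, P, V.
have h1 : sup E <= RS mu n P V + del * mu setT by apply: ge_sup => //; exists (RS mu n P V - del * mu setT).
have h2 : RS mu n P V - del * mu setT <= sup E.
  by apply: ub_le_sup => //; exists (RS mu n P V + del * mu setT).
rewrite /Int -/E ler_norml; apply/andP; split; lra.
Qed.

Lemma find_interval (del y : R) N : 0 < del -> 0 <= y -> y < N%:R * del ->
  exists i, (i < N)%N /\ i%:R * del <= y < i.+1%:R * del.
Proof.
move=> d0 y0; elim: N => [|N IH] hy; first by move: hy; rewrite mul0r; lra.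
case: (ltP y (N%:R * del)) => h.
  by have [i [hi hh]] := IH h; exists i; split => //; apply: ltnW.
by exists N; split => //; apply/andP; split.
Qed.

Lemma level_part g (del : R) : bnd g -> 0 < del ->
  exists n P, part n P /\ fine g del n P.
Proof.
move=> [K hK] d0.
pose c := `|K|.
have hc : forall p, `|g p| <= c by move=> p; apply: (le_trans (hK p)); apply: ler_norm.
pose n := (Num.trunc (2 * c / del)).+1.
have hn : 2 * c < n%:R * del.
  have := truncnS_gt (2 * c / del); rewrite -/n ltr_pdivrMr //.
pose P := fun i : nat => [set p | i%:R * del <= g p + c < i.+1%:R * del].
exists n, P; split; first split.
- move=> i j hi hj ne.
  rewrite predeqE => p; split => // -[/andP[a1 a2] /andP[b1 b2]].
  case: (ltngtP i j) => hij; last by apply: ne.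
    have : i.+1%:R * del <= j%:R * del by rewrite ler_pM2r // ler_nat.
    lra.
  have : j.+1%:R * del <= i%:R * del by rewrite ler_pM2r // ler_nat.
  lra.
- move=> p; have := hc p; rewrite ler_norml => /andP[h1 h2].
  have h0 : 0 <= g p + c by lra.
  have h3 : g p + c < n%:R * del by lra.
  have [i [hi hh]] := @find_interval del (g p + c) n d0 h0 h3.
  by exists i.
- move=> i _ p q /andP[a1 a2] /andP[b1 b2].
  have e : i.+1%:R * del = i%:R * del + del by rewrite -addn1 natrD mulrDl mul1r.
  rewrite e in a2 b2; rewrite ler_norml; apply/andP; split; lra.
Qed.

Definition ptag (P : nat -> set T) (i : nat) : option T :=
  match pselect (exists p, P i p) with
  | left e => Some (proj1_sig (cid e))
  | right _ => None
  end.

Lemma ptagP P i : (exists p, ptag P i = Some p /\ P i p) \/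
  (ptag P i = None /\ P i = set0).
Proof.
rewrite /ptag; case: pselect => [e|ne].
  by left; exists (proj1_sig (cid e)); split => //; apply: (proj2_sig (cid e)).
right; split => //; rewrite predeqE => p; split => // h; apply: ne; by exists p.
Qed.

Definition tg g P i := oapp g 0 (ptag P i).

Lemma tg_ok g n P : tagok g n P (tg g P).
Proof.
move=> i _; rewrite /tg; have [[p [-> hp]]|[-> ->]] := @ptagP P i; last by left.
by right; exists p.
Qed.

Definition refine m (P Q : nat -> set T) k := P (k %/ m)%N `&` Q (k %% m)%N.

Lemma refine_part n m P Q : part n P -> part m Q -> part (n * m) (refine m P Q).
Proof.
move=> [dP cP] [dQ cQ]; split.
  move=> k k' hk hk' ne.
  have m0 : (0 < m)%N by rewrite lt0n; apply/eqP => e; move: hk; rewrite e muln0.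
  case: (eqVneq (k %/ m) (k' %/ m))%N => e1.
    have e2 : (k %% m)%N <> (k' %% m)%N.
      by move=> e2; apply: ne; rewrite (divn_eq k m) (divn_eq k' m) e1 e2.
    have := dQ _ _ (ltn_pmod k m0) (ltn_pmod k' m0) e2.
    move=> h; rewrite predeqE => p; split => // -[[_ a] [_ b]].
    by move: h => /seteqP[+ _] => /(_ p (conj a b)).
  have e1' : (k %/ m)%N <> (k' %/ m)%N by move=> e; move: e1; rewrite e eqxx.
  have l1 : (k %/ m < n)%N by rewrite ltn_divLR.
  have l2 : (k' %/ m < n)%N by rewrite ltn_divLR.
  have h := dP _ _ l1 l2 e1'.
  rewrite predeqE => p; split => // -[[a _] [b _]].
  by move: h => /seteqP[+ _] => /(_ p (conj a b)).
move=> p; have [i [hi pi]] := cP p; have [j [hj qj]] := cQ p.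
exists (i * m + j)%N.
have m0 : (0 < m)%N by rewrite lt0n; apply/eqP => e; move: hj; rewrite e.
have e1 : ((i * m + j) %/ m = i)%N by rewrite divnMDl // divn_small // addn0.
have e2 : ((i * m + j) %% m = j)%N by rewrite modnMDl modn_small.
split; last by rewrite /refine e1 e2.
nia.
Qed.

Lemma refine_fineL g del n m P Q : part n P -> part m Q -> fine g del n P ->
  fine g del (n * m) (refine m P Q).
Proof.
move=> _ _ hf k hk p q [a _] [b _]; apply: (hf (k %/ m)%N) => //.
have m0 : (0 < m)%N by rewrite lt0n; apply/eqP => e; move: hk; rewrite e muln0.
by rewrite ltn_divLR.
Qed.

Lemma refine_fineR g del n m P Q : part n P -> part m Q -> fine g del m Q ->
  fine g del (n * m) (refine m P Q).
Proof.
move=> _ _ hf k hk p q [_ a] [_ b]; apply: (hf (k %% m)%N) => //.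
have m0 : (0 < m)%N by rewrite lt0n; apply/eqP => e; move: hk; rewrite e muln0.
by rewrite ltn_pmod.
Qed.

Definition indf (B : set T) : T -> R := fun p => if pselect (B p) then 1 else 0.

Definition two (B : set T) (i : nat) := if i == 0%N then B else ~` B.

Lemma two_part B : part 2 (two B).
Proof.
split.
  move=> [|[|i]] [|[|j]] //= _ _ _; rewrite /two /=.
    by rewrite setICr.
  by rewrite setICl.
move=> p; case: (pselect (B p)) => h; first by exists 0%N.
by exists 1%N.
Qed.

Lemma norm3 (x y w : R) : `|x - y - w| <= `|x| + `|y| + `|w|.
Proof.
apply: (le_trans (ler_normB _ _)); rewrite lerD2r.
by apply: (le_trans (ler_normB _ _)).
Qed.

Lemma Int_lin mu g h (a b : R) : posba mu -> bnd g -> bnd h ->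
  Int mu (fun p => a * g p + b * h p) = a * Int mu g + b * Int mu h.
Proof.
move=> hmu hg hh; have mT : 0 <= mu setT by apply: hmu.2.
apply/eqP; rewrite -subr_eq0; apply/eqP.
apply: (@zero_lim _ _ ((2 * `|a| + 2 * `|b|) * mu setT)).
  by apply: mulr_ge0 => //; apply: addr_ge0; apply: mulr_ge0.
move=> e e0.
have [n1 [P1 [hP1 fP1]]] := level_part hg e0.
have [n2 [P2 [hP2 fP2]]] := level_part hh e0.
have hP := refine_part hP1 hP2.
have fg := refine_fineL hP1 hP2 fP1.
have fh := refine_fineR hP1 hP2 fP2.
set P := refine n2 P1 P2 in hP fg fh; set n := (n1 * n2)%N in hP fg fh.
set k := (fun p => a * g p + b * h p).
have fk : fine k ((`|a| + `|b|) * e) n P.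
  move=> i hi p q hp hq; rewrite /k.
  have -> : a * g p + b * h p - (a * g q + b * h q) = a * (g p - g q) + b * (h p - h q) by ring.
  apply: (le_trans (ler_normD _ _)); rewrite !normrM mulrDl.
  apply: lerD; apply: ler_wpM2l => //.
    exact: (fg i hi).
  exact: (fh i hi).
have Ag := Int_approx hmu (ltW e0) hP fg (@tg_ok g n P).
have Ah := Int_approx hmu (ltW e0) hP fh (@tg_ok h n P).
have Ak := Int_approx hmu (_ : 0 <= (`|a| + `|b|) * e) hP fk (@tg_ok k n P).
have RSe : RS mu n P (tg k P) = a * RS mu n P (tg g P) + b * RS mu n P (tg h P).
  rewrite /RS !mulr_sumr -big_split; apply: eq_bigr => i _.
  by rewrite /tg /k; case: (ptag P i) => [p|] /=; ring.
have e1 : Int mu k - (a * Int mu g + b * Int mu h) =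
  (Int mu k - RS mu n P (tg k P)) - a * (Int mu g - RS mu n P (tg g P))
   - b * (Int mu h - RS mu n P (tg h P)) by rewrite RSe; ring.
rewrite e1; apply: (le_trans (norm3 _ _ _)).
rewrite !normrM.
have t1 : `|a| * `|Int mu g - RS mu n P (tg g P)| <= `|a| * (e * mu setT) by apply: ler_wpM2l.
have t2 : `|b| * `|Int mu h - RS mu n P (tg h P)| <= `|b| * (e * mu setT) by apply: ler_wpM2l.
have := Ak (mulr_ge0 (addr_ge0 (normr_ge0 a) (normr_ge0 b)) (ltW e0)).
lra.
Qed.

Lemma Int_ge0 mu g : posba mu -> bnd g -> (forall p, 0 <= g p) -> 0 <= Int mu g.
Proof.
move=> hmu hg g0; have mT : 0 <= mu setT by apply: hmu.2.
apply: (@ge0_lim _ _ (mu setT)) => // e e0.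
have [n [P [hP fP]]] := level_part hg e0.
have A := Int_approx hmu (ltW e0) hP fP (@tg_ok g n P).
have : 0 <= RS mu n P (tg g P).
  apply: sumr_ge0 => i _; apply: mulr_ge0; last by apply: hmu.2.
  by rewrite /tg; case: (ptag P i) => [p|] /=.
move: A; rewrite ler_norml => /andP[A1 A2]; lra.
Qed.

Lemma Int_ind mu B : posba mu -> Int mu (indf B) = mu B.
Proof.
move=> hmu.
have f0 : fine (indf B) 0 2 (two B).
  move=> i; destruct i as [|[|i]]; move=> hi p q; rewrite /two /indf /= => hp hq //.
    by case: (pselect (B p)) => h1; case: (pselect (B q)) => h2 //; rewrite subrr normr0.
  by case: (pselect (B p)) => h1; case: (pselect (B q)) => h2 //; rewrite subrr normr0.
have A := Int_approx hmu (lexx 0) (two_part B) f0 (@tg_ok (indf B) 2 (two B)).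
have RSe : RS mu 2 (two B) (tg (indf B) (two B)) = mu B.
  rewrite /RS !big_ord_recr big_ord0 /= add0r.
  have -> : tg (indf B) (two B) 1 * mu (two B 1) = 0.
    rewrite /tg; have hh := @ptagP (two B) 1.
    case: hh => [[p [-> hp]]|[-> _]] /=; last by rewrite mul0r.
    rewrite /indf; case: (pselect (B p)) => hb; last by rewrite mul0r.
    by move: hp; rewrite /two /= => /(_ hb).
  rewrite addr0 /tg; have hh := @ptagP (two B) 0.
  case: hh => [[p [-> hp]]|[-> e]] /=.
    by rewrite /indf; case: (pselect (B p)) => hb; [rewrite mul1r|].
  by move: e; rewrite /two /= => ->; rewrite ba0 ?mulr0 //; apply: hmu.1.
move: A; rewrite RSe mul0r normr_le0 subr_eq0 => /eqP //.
Qed.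

Lemma isInt_Int mu g : posba mu -> bnd g -> is_ba_integral mu g (Int mu g).
Proof.
move=> hmu hg e e0; have mT : 0 <= mu setT by apply: hmu.2.
have m1 : 0 < mu setT + 1 by lra.
exists (e / (mu setT + 1)); first by apply: divr_gt0.
move=> s v hs hv hf ht.
have := Int_approx hmu (ltW (divr_gt0 e0 m1)) (fin_part_part hs) hf ht.
rewrite distrC => /le_trans; apply.
by rewrite mulrAC ler_pdivrMr //; nra.
Qed.

Lemma mkseq_part n P : part n P -> fin_partition (mkseq P n).
Proof.
move=> [hd hc]; split.
  move=> i j; rewrite size_mkseq => hi hj ne; rewrite !nth_mkseq //; exact: hd.
by move=> p; have [i [hi hp]] := hc p; exists i; rewrite size_mkseq nth_mkseq.
Qed.

Lemma sum_mkseq mu n P V :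
  \sum_(i < size (mkseq P n)) nth 0 (mkseq V n) i * mu (nth set0 (mkseq P n) i)
  = RS mu n P V.
Proof.
rewrite -(big_mkord xpredT (fun i => nth 0 (mkseq V n) i * mu (nth set0 (mkseq P n) i))).
rewrite size_mkseq big_mkord /RS; apply: eq_bigr => i _; rewrite !nth_mkseq //.
Qed.

Lemma isInt_uniq mu g I : posba mu -> bnd g -> is_ba_integral mu g I -> I = Int mu g.
Proof.
move=> hmu hg hI; have mT : 0 <= mu setT by apply: hmu.2.
apply/eqP; rewrite -subr_eq0; apply/eqP; apply: (@zero_lim _ _ (1 + mu setT)).
  by apply: addr_ge0.
move=> e e0; have [dl dl0 H] := hI e e0.
have del0 : 0 < Num.min dl e by rewrite lt_min dl0 e0.
have [n [P [hP fP]]] := level_part hg del0.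
have fdl : fine g dl n P.
  by move=> i hi p q hp hq; apply: (le_trans (fP i hi p q hp hq)); rewrite ge_min lexx.
have fe : fine g e n P.
  by move=> i hi p q hp hq; apply: (le_trans (fP i hi p q hp hq)); rewrite ge_min lexx orbT.
have s1 : size (mkseq (tg g P) n) = size (mkseq P n) by rewrite !size_mkseq.
have s2 : forall i, (i < size (mkseq P n))%N -> forall p q,
    nth set0 (mkseq P n) i p -> nth set0 (mkseq P n) i q -> `|g p - g q| <= dl.
  by move=> i; rewrite size_mkseq => hi p q; rewrite nth_mkseq //; apply: fdl.
have s3 : forall i, (i < size (mkseq P n))%N -> nth set0 (mkseq P n) i = set0 \/
    exists2 p, nth set0 (mkseq P n) i p & nth 0 (mkseq (tg g P) n) i = g p.
  move=> i; rewrite size_mkseq => hi; rewrite !nth_mkseq //.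
  exact: (@tg_ok g n P i hi).
have := H (mkseq P n) (mkseq (tg g P) n) (mkseq_part hP) s1 s2 s3.
rewrite sum_mkseq => h1.
have h2 := Int_approx hmu (ltW e0) hP fe (@tg_ok g n P).
have : I - Int mu g = - (RS mu n P (tg g P) - I) + (RS mu n P (tg g P) - Int mu g) by ring.
move=> ->; apply: (le_trans (ler_normD _ _)); rewrite normrN (distrC _ (Int mu g)).
rewrite mulrDr mulr1; exact: lerD.
Qed.

Lemma baint_Int mu g : posba mu -> bnd g -> ba_integral mu g = Int mu g.
Proof.
move=> hmu hg; rewrite /ba_integral; apply: isInt_uniq => //.
apply: xgetPex; exists (Int mu g); exact: isInt_Int.
Qed.

Lemma bnd_ind B : bnd (indf B).
Proof. by exists 1 => p; rewrite /indf; case: (pselect (B p)) => h; rewrite ?normr1 ?normr0. Qed.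

Lemma bnd_lc (a b : R) g h : bnd g -> bnd h -> bnd (fun p => a * g p + b * h p).
Proof.
move=> [K1 h1] [K2 h2]; exists (`|a| * K1 + `|b| * K2) => p.
apply: (le_trans (ler_normD _ _)); rewrite !normrM.
by apply: lerD; apply: ler_wpM2l.
Qed.

Lemma bnd_cst (c : R) : bnd (fun _ => c).
Proof. by exists `|c|. Qed.

Section Psi.
Variable psi : (T -> R) -> R.
Hypothesis hlin : forall (a b : R) g h, bnd g -> bnd h ->
  psi (fun p => a * g p + b * h p) = a * psi g + b * psi h.
Hypothesis hmono : forall g h, bnd g -> bnd h -> (forall p, g p <= h p) -> psi g <= psi h.

Lemma bnd_sum n (c : nat -> R) (Q : nat -> set T) :
  bnd (fun p => \sum_(i < n) c i * indf (Q i) p).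
Proof.
exists (\sum_(i < n) `|c i|) => p; apply: (le_trans (ler_norm_sum _ _ _)).
apply: ler_sum => i _; rewrite normrM /indf; case: (pselect (Q i p)) => h.
  by rewrite normr1 mulr1.
by rewrite normr0 mulr0.
Qed.

Lemma psi0 : psi (fun _ => 0) = 0.
Proof.
move: (hlin 0 0 (bnd_cst 0) (bnd_cst 0)); rewrite !mul0r !addr0 => h; exact: h.
Qed.

Lemma psi_sum n (c : nat -> R) (Q : nat -> set T) :
  psi (fun p => \sum_(i < n) c i * indf (Q i) p) = \sum_(i < n) c i * psi (indf (Q i)).
Proof.
elim: n => [|n IH].
  rewrite big_ord0.
  have -> : (fun p => \sum_(i < 0) c i * indf (Q i) p) = (fun _ => 0).
    by apply: funext => p; rewrite big_ord0.
  exact: psi0.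
have -> : (fun p => \sum_(i < n.+1) c i * indf (Q i) p) =
   (fun p => 1 * (\sum_(i < n) c i * indf (Q i) p) + c n * indf (Q n) p).
  by apply: funext => p; rewrite big_ord_recr /= mul1r.
rewrite hlin; [|exact: bnd_sum|exact: bnd_ind].
by rewrite IH mul1r big_ord_recr.
Qed.

Lemma sum_ind_part n P (c : nat -> R) p i0 : part n P -> (i0 < n)%N -> P i0 p ->
  \sum_(i < n) c i * indf (P i) p = c i0.
Proof.
move=> [hd _] hi0 hp.
rewrite (bigD1 (Ordinal hi0)) //= big1 ?addr0.
  by rewrite /indf; case: (pselect (P i0 p)) => // h; rewrite mulr1.
move=> i ne; rewrite /indf; case: (pselect (P i p)) => h; last by rewrite mulr0.
have ne' : (i : nat) <> i0 by move=> e; move: ne; rewrite -val_eqE /= e eqxx.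
have := hd i i0 (ltn_ord i) hi0 ne'.
by move=> /seteqP[+ _] => /(_ p (conj h hp)).
Qed.

Lemma Int_psi mu g : posba mu -> (forall B, mu B = psi (indf B)) -> bnd g ->
  Int mu g = psi g.
Proof.
move=> hmu hmu_psi hg; have mT : 0 <= mu setT by apply: hmu.2.
apply/eqP; rewrite -subr_eq0; apply/eqP; apply: (@zero_lim _ _ (2 * mu setT)).
  by apply: mulr_ge0.
move=> e e0.
have [n [P [hP fP]]] := level_part hg e0.
have A := Int_approx hmu (ltW e0) hP fP (@tg_ok g n P).
have sT : \sum_(i < n) mu (P i) = mu setT.
  by rewrite (ba_part _ hmu.1 hP); apply: eq_bigr => i _; rewrite setTI.
have key : forall s : R, (s = 1 \/ s = -1) ->
    psi (fun p => \sum_(i < n) (tg g P i + s * e) * indf (P i) p) =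
    RS mu n P (tg g P) + s * e * mu setT.
  move=> s _; rewrite (psi_sum n (fun i => tg g P i + s * e) P) /RS -sT mulr_sumr -big_split; apply: eq_bigr => i _.
  by rewrite -hmu_psi mulrDl.
have pt : forall p, exists2 i, (i < n)%N & P i p /\ `|g p - tg g P i| <= e.
  move=> p; have [i [hi hp]] := hP.2 p; exists i => //; split => //.
  rewrite /tg; have hh := @ptagP P i.
  case: hh => [[q [-> hq]]|[_ e']] /=; first exact: (fP i hi p q hp hq).
  by move: hp; rewrite e'.
have up : psi g <= RS mu n P (tg g P) + 1 * e * mu setT.
  rewrite -key; last by left.
  apply: hmono; [exact: hg|exact: (@bnd_sum n (fun i => tg g P i + 1 * e) P)|].
  move=> p; have [i hi [hp hn]] := pt p.
  rewrite (@sum_ind_part n P (fun i => tg g P i + 1 * e) p i hP hi hp).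
  by move: hn; rewrite ler_norml => /andP[_ ?]; lra.
have lo : RS mu n P (tg g P) + (-1) * e * mu setT <= psi g.
  rewrite -key; last by right.
  apply: hmono; [exact: (@bnd_sum n (fun i => tg g P i + (-1) * e) P)|exact: hg|].
  move=> p; have [i hi [hp hn]] := pt p.
  rewrite (@sum_ind_part n P (fun i => tg g P i + (-1) * e) p i hP hi hp).
  by move: hn; rewrite ler_norml => /andP[? _]; lra.
move: A; rewrite ler_norml => /andP[A1 A2].
rewrite ler_norml; apply/andP; split; nra.
Qed.

End Psi.

Definition pp (h : T -> R) : R := sup [set h p | p in [set: T]].

Lemma pp_ub h p : bnd h -> h p <= pp h.
Proof.
move=> [K hK]; apply: ub_le_sup; last by exists p.
exists K => _ [q _ <-]; apply: (le_trans (ler_norm _)); exact: hK.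
Qed.

Lemma pp_empty h : ~ (exists p : T, True) -> pp h = 0.
Proof.
move=> ne; rewrite /pp.
have -> : [set h p | p in [set: T]] = set0.
  by rewrite predeqE => x; split => // -[p _ _]; apply: ne; exists p.
exact: sup0.
Qed.

Lemma pp_le h K : 0 <= K -> (forall p, h p <= K) -> pp h <= K.
Proof.
move=> K0 hK; case: (pselect (exists p : T, True)) => [[p _]|ne].
  by apply: ge_sup; [exists (h p), p|move=> _ [q _ <-]].
by rewrite pp_empty.
Qed.

Lemma pp_ext g h : (forall p, g p = h p) -> pp g = pp h.
Proof. by move=> e; congr pp; apply: funext. Qed.

Lemma bnd_ext g h : (forall p, g p = h p) -> bnd g -> bnd h.
Proof. by move=> e [K hK]; exists K => p; rewrite -e. Qed.

Lemma pp_add g h : bnd g -> bnd h -> pp (fun p => g p + h p) <= pp g + pp h.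
Proof.
move=> bg bh; case: (pselect (exists p : T, True)) => [[p _]|ne]; last by rewrite !pp_empty // addr0.
apply: ge_sup; first by exists (g p + h p), p.
by move=> _ [q _ <-]; apply: lerD; apply: pp_ub.
Qed.

Lemma pp_scale (t : R) h : 0 <= t -> bnd h -> pp (fun p => t * h p) <= t * pp h.
Proof.
move=> t0 bh; case: (pselect (exists p : T, True)) => [[p _]|ne]; last by rewrite !pp_empty // mulr0.
apply: ge_sup; first by exists (t * h p), p.
by move=> _ [q _ <-]; apply: ler_wpM2l => //; apply: pp_ub.
Qed.

Lemma pp_scaleE (t : R) h : 0 < t -> bnd h -> pp (fun p => t * h p) = t * pp h.
Proof.
move=> t0 bh; apply/eqP; rewrite eq_le pp_scale ?(ltW t0) //=.
have bt : bnd (fun p => t * h p).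
  by apply: (@bnd_ext (fun p => t * h p + 0 * h p)) => [p|]; [ring|apply: bnd_lc].
have ti : 0 <= t^-1 by rewrite invr_ge0 ltW.
have := pp_scale ti bt.
have -> : pp (fun p => t^-1 * (t * h p)) = pp h.
  by apply: pp_ext => p; rewrite mulrA mulVf ?gt_eqF // mul1r.
move=> h1; have := ler_wpM2l (ltW t0) h1.
by rewrite mulrA mulfV ?gt_eqF // mul1r.
Qed.

Definition valid (G : set ((T -> R) * R)) :=
  [/\ (forall h c c', G (h, c) -> G (h, c') -> c = c'),
      (forall (a b : R) h1 c1 h2 c2, G (h1, c1) -> G (h2, c2) ->
          G ((fun p => a * h1 p + b * h2 p), a * c1 + b * c2)) &
      (forall h c, G (h, c) -> bnd h /\ c <= pp h)].

Lemma ext1 G h : valid G -> G (fun _ => 0, 0) -> bnd h -> ~ (exists c, G (h, c)) ->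
  exists G', [/\ valid G', G `<=` G' & exists c, G' (h, c)].
Proof.
move=> [V1 V2 V3] G00 bh nh.
pose S := [set x | exists w Fw, G (w, Fw) /\ x = Fw - pp (fun p => w p - h p)].
have key : forall w Fw w' Fw', G (w, Fw) -> G (w', Fw') ->
    Fw - pp (fun p => w p - h p) <= pp (fun p => w' p + h p) - Fw'.
  move=> w Fw w' Fw' g1 g2.
  have g3 := V2 1 1 _ _ _ _ g1 g2.
  have [b3 le3] := V3 _ _ g3.
  have [bw _] := V3 _ _ g1; have [bw' _] := V3 _ _ g2.
  have bwh : bnd (fun p => w p - h p).
    by apply: (bnd_ext _ (bnd_lc 1 (-1) bw bh)) => p /=; ring.
  have bwh' : bnd (fun p => w' p + h p).
    by apply: (bnd_ext _ (bnd_lc 1 1 bw' bh)) => p /=; ring.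
  have := pp_add bwh bwh'.
  have -> : pp (fun p => w p - h p + (w' p + h p)) = pp (fun p => 1 * w p + 1 * w' p).
    by apply: pp_ext => p; ring.
  lra.
have S0 : S (0 - pp (fun p => 0 - h p)) by exists (fun _ => 0), 0.
have ubS : forall w' Fw', G (w', Fw') -> ubound S (pp (fun p => w' p + h p) - Fw').
  by move=> w' Fw' g2 _ [w [Fw [g1 ->]]]; exact: key.
pose c0 := sup S.
have c0le : forall w' Fw', G (w', Fw') -> c0 <= pp (fun p => w' p + h p) - Fw'.
  by move=> w' Fw' g2; apply: ge_sup; [exists (0 - pp (fun p => 0 - h p))|apply: ubS].
have lec0 : forall w Fw, G (w, Fw) -> Fw - pp (fun p => w p - h p) <= c0.
  move=> w Fw g1; apply: ub_le_sup; last by exists w, Fw.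
  by exists (pp (fun p => 0 + h p) - 0); apply: ubS.
pose G' := [set e | exists w Fw (t : R), G (w, Fw) /\
  e = ((fun p => w p + t * h p), Fw + t * c0)].
exists G'; split.
- split.
  + move=> k c c' [w1 [F1 [t1 [g1 e1]]]] [w2 [F2 [t2 [g2 e2]]]].
    case: e1 => ek1 ec1; case: e2 => ek2 ec2; subst c c'.
    have ew : forall p, w1 p + t1 * h p = w2 p + t2 * h p.
      by move=> p; have := congr1 (fun f => f p) (etrans (esym ek1) ek2).
    case: (eqVneq t1 t2) => et.
      subst t2; have ew' : w1 = w2 by apply: funext => p; have := ew p; lra.
      by subst w2; rewrite (V1 _ _ _ g1 g2).
    exfalso; apply: nh.
    have dt : t1 - t2 != 0 by rewrite subr_eq0.
    exists ((t1 - t2)^-1 * F2 + (-(t1 - t2)^-1) * F1).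
    have -> : h = (fun p => (t1 - t2)^-1 * w2 p + (-(t1 - t2)^-1) * w1 p).
      apply: funext => p.
      rewrite (_ : w2 p = w1 p + (t1 - t2) * h p); last by have := ew p; lra.
      by field.
    exact: V2 g2 g1.
  + move=> a b k1 c1 k2 c2 [w1 [F1 [t1 [g1 e1]]]] [w2 [F2 [t2 [g2 e2]]]].
    case: e1 => -> ->; case: e2 => -> ->.
    exists (fun p => a * w1 p + b * w2 p), (a * F1 + b * F2), (a * t1 + b * t2).
    split; first exact: V2.
    by congr (_, _); [apply: funext => p /=; ring|ring].
  + move=> k c [w [Fw [t [g1 e1]]]]; case: e1 => -> ->.
    have [bw lw] := V3 _ _ g1.
    split; first by apply: (bnd_ext _ (bnd_lc 1 t bw bh)) => p /=; ring.
    case: (ltgtP t 0) => ht.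
    * pose s := - t; have s0 : 0 < s by rewrite /s oppr_gt0.
      have gs := V2 (s^-1) 0 _ _ _ _ g1 g1.
      have [bs _] := V3 _ _ gs.
      have := lec0 _ _ gs.
      have bsh : bnd (fun p => s^-1 * w p + 0 * w p - h p).
        by apply: (bnd_ext _ (bnd_lc 1 (-1) bs bh)) => p /=; ring.
      have -> : pp (fun p => w p + t * h p) =
          s * pp (fun p => s^-1 * w p + 0 * w p - h p).
        rewrite -pp_scaleE //; apply: pp_ext => p; rewrite /s; field.
        by rewrite lt_eqF.
      have eF : Fw = s * (s^-1 * Fw + 0 * Fw) by field; rewrite gt_eqF.
      have et : t = - s by rewrite /s opprK.
      move: (s^-1 * Fw + 0 * Fw) eF => u ->.
      move: (pp (fun p => s^-1 * w p + 0 * w p - h p)) => X.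
      rewrite et => hu; nra.
    * have gs := V2 (t^-1) 0 _ _ _ _ g1 g1.
      have [bs _] := V3 _ _ gs.
      have := c0le _ _ gs.
      have bsh : bnd (fun p => t^-1 * w p + 0 * w p + h p).
        by apply: (bnd_ext _ (bnd_lc 1 1 bs bh)) => p /=; ring.
      have -> : pp (fun p => w p + t * h p) =
          t * pp (fun p => t^-1 * w p + 0 * w p + h p).
        rewrite -pp_scaleE //; apply: pp_ext => p; field.
        by rewrite gt_eqF.
      have eF : Fw = t * (t^-1 * Fw + 0 * Fw) by field; rewrite gt_eqF.
      move: (t^-1 * Fw + 0 * Fw) eF => u ->.
      move: (pp (fun p => t^-1 * w p + 0 * w p + h p)) => X.
      move=> hu; nra.
    * subst t; rewrite mul0r addr0 (@pp_ext _ w) // => p; ring.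
- move=> [w Fw] g1; exists w, Fw, 0; split => //.
  by congr (_, _); [apply: funext => p /=; ring|ring].
- exists c0; exists (fun _ => 0), 0, 1; split => //.
  by congr (_, _); [apply: funext => p /=; ring|ring].
Qed.

Lemma HBext (G0 : set ((T -> R) * R)) : valid G0 -> G0 (fun _ => 0, 0) ->
  exists psi : (T -> R) -> R,
   [/\ (forall (a b : R) g h, bnd g -> bnd h ->
          psi (fun p => a * g p + b * h p) = a * psi g + b * psi h),
       (forall h, bnd h -> psi h <= pp h) &
       (forall h c, G0 (h, c) -> psi h = c)].
Proof.
move=> vG0 z0.
pose P := fun X : set ((T -> R) * R) => valid (X `|` G0).
have chain : forall F, F `<=` P -> total_on F subset -> P (\bigcup_(X in F) X).
  move=> F FP tot.
  set U := \bigcup_(X in F) X.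
  have two : forall e1 e2, (U `|` G0) e1 -> (U `|` G0) e2 ->
      exists Y, [/\ valid Y, Y `<=` U `|` G0, Y e1 & Y e2].
    have sub : forall X, F X -> X `|` G0 `<=` U `|` G0.
      by move=> X FX e [xe|ge]; [left; exists X|right].
    move=> e1 e2 [[X1 F1 x1]|g1] [[X2 F2 x2]|g2].
    - have [s12|s21] := tot _ _ F1 F2.
      + by exists (X2 `|` G0); split; [exact: FP|exact: sub|left; exact: s12|left].
      + by exists (X1 `|` G0); split; [exact: FP|exact: sub|left|left; exact: s21].
    - by exists (X1 `|` G0); split; [exact: FP|exact: sub|left|right].
    - by exists (X2 `|` G0); split; [exact: FP|exact: sub|right|left].
    - by exists G0; split => // e ge; right.
  split.
  + move=> h c c' i1 i2; have [Y [[V1 _ _] _ y1 y2]] := two _ _ i1 i2.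
    exact: V1 _ _ _ y1 y2.
  + move=> a b h1 c1 h2 c2 i1 i2; have [Y [[_ V2 _] sY y1 y2]] := two _ _ i1 i2.
    by apply: sY; apply: V2.
  + move=> h c i1; have [Y [[_ _ V3] _ y1 _]] := two _ _ i1 i1.
    exact: V3.
have [A [PA maxA]] := Zorn_bigcup chain.
pose Gm := A `|` G0.
have vGm : valid Gm := PA.
case: (vGm) => V1 V2 V3.
have G0m : G0 `<=` Gm by move=> e ge; right.
have tot : forall h, bnd h -> exists c, Gm (h, c).
  move=> h bh; case: (pselect (exists c, Gm (h, c))) => // nh; exfalso.
  have [G' [vG' sG' [c hc]]] := ext1 PA (G0m _ z0) bh nh.
  apply: (maxA G').
    split; first by move=> e ea; apply: sG'; left.
    by move=> sub; apply: nh; exists c; left; exact: sub _ hc.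
  rewrite /P; have -> : G' `|` G0 = G'.
    by rewrite predeqE => e; split => [[//|/G0m/sG' //]|]; left.
  exact: vG'.
pose psi := fun h => xget 0 [set c | Gm (h, c)].
have psiP : forall h, bnd h -> Gm (h, psi h).
  by move=> h bh; exact: (xgetPex 0 (tot h bh)).
have psiE : forall h c, Gm (h, c) -> psi h = c.
  move=> h c hc; have bh := (V3 _ _ hc).1; exact: V1 _ _ _ (psiP h bh) hc.
exists psi; split.
- by move=> a b g h bg bh; apply: psiE; apply: V2; apply: psiP.
- by move=> h bh; exact: (V3 _ _ (psiP h bh)).2.
- by move=> h c hc; apply: psiE; right.
Qed.
End Meas.

Section Lip.
Variables (R : realType) (M : Type) (d : M -> M -> R) (z : M).
Hypothesis hd : is_metric d.
Local Notation T := (Mt M).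
Local Notation ind := (@indf R M).
Local Notation bnd_cst := (@bnd_cst R M).
Local Notation bnd_ind := (@bnd_ind R M).

Lemma d_ge0 x y : 0 <= d x y. Proof. by case: hd. Qed.
Lemma d_xx x : d x x = 0. Proof. by case: hd => _ [h _]; apply/h. Qed.
Lemma d_sym x y : d x y = d y x. Proof. by case: hd => _ [_ [h _]]. Qed.
Lemma d_tri x y w : d x w <= d x y + d y w. Proof. by case: hd => _ [_ [_ h]]. Qed.
Lemma d_gt0 x y : x <> y -> 0 < d x y.
Proof.
move=> ne; rewrite lt_neqAle d_ge0 andbT; apply/eqP => e.
by apply: ne; case: hd => _ [h _]; apply/h.
Qed.

Definition slopes (f : M -> R) :=
  [set r | exists x y, x <> y /\ r = `|f x - f y| / d x y].

Lemma lip_le_set f K : 0 <= K -> (forall x y, x <> y -> `|f x - f y| / d x y <= K) ->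
  lipnorm d f <= K.
Proof.
move=> K0 hK; rewrite /lipnorm -/(slopes f).
case: (pselect (exists r, slopes f r)) => [[r hr]|ne].
  by apply: ge_sup; [exists r|move=> _ [x [y [ne ->]]]; apply: hK].
have -> : slopes f = set0 by rewrite predeqE => r; split => // hr; apply: ne; exists r.
by rewrite sup0.
Qed.

Lemma lip_le f L : 0 <= L -> (forall x y, `|f x - f y| <= L * d x y) -> lipnorm d f <= L.
Proof.
move=> L0 hL; apply: lip_le_set => // x y ne.
by rewrite ler_pdivrMr ?d_gt0.
Qed.

Lemma slopes_ub f : Lip0 d z f -> has_ubound (slopes f).
Proof.
move=> [_ [L hL]]; exists L => _ [x [y [ne ->]]].
by rewrite ler_pdivrMr ?d_gt0.
Qed.

Lemma lip_bound f : Lip0 d z f -> forall x y, `|f x - f y| <= lipnorm d f * d x y.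
Proof.
move=> hf x y; case: (pselect (x = y)) => [->|ne].
  by rewrite subrr normr0 d_xx mulr0.
rewrite -ler_pdivrMr ?d_gt0 //; apply: ub_le_sup; first exact: slopes_ub.
by exists x, y.
Qed.

Lemma lipnorm_ge0 f : Lip0 d z f -> 0 <= lipnorm d f.
Proof.
move=> hf; case: (pselect (exists r, slopes f r)) => [[r hr]|ne].
  apply: (@le_trans _ _ r); last by apply: ub_le_sup => //; exact: slopes_ub.
  by case: hr => x [y [ne ->]]; apply: divr_ge0 => //; apply: d_ge0.
rewrite /lipnorm -/(slopes f).
have -> : slopes f = set0 by rewrite predeqE => r; split => // hr; apply: ne; exists r.
by rewrite sup0.
Qed.

Lemma blip_bound f : BLip0 d z f -> forall x y, `|f x - f y| <= d x y.
Proof.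
move=> [hf h1] x y; apply: (le_trans (lip_bound hf x y)).
by rewrite -[leRHS]mul1r; apply: ler_wpM2r => //; apply: d_ge0.
Qed.

Lemma Phi_bound f p : Lip0 d z f -> `|Phi d f p| <= lipnorm d f.
Proof.
move=> hf; case: p => [[x y] /= ne]; rewrite /Phi /= normrM.
have d0 := d_gt0 ne.
have di : 0 <= (d x y)^-1 by rewrite invr_ge0 ltW.
rewrite (ger0_norm di) -/(_ / _) ler_pdivrMr //.
exact: lip_bound.
Qed.

Lemma bnd_Phi f : Lip0 d z f -> bnd (Phi d f).
Proof. by move=> hf; exists (lipnorm d f) => p; exact: Phi_bound. Qed.

Lemma Phi_lin (a b : R) f g :
  Phi d (fun x => a * f x + b * g x) = (fun p => a * Phi d f p + b * Phi d g p).
Proof. by apply: funext => p; rewrite /Phi; ring. Qed.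

Lemma Lip0_lc (a b : R) f g : Lip0 d z f -> Lip0 d z g -> Lip0 d z (fun x => a * f x + b * g x).
Proof.
move=> [f0 [L1 h1]] [g0 [L2 h2]]; split; first by rewrite f0 g0 !mulr0 addr0.
exists (`|a| * L1 + `|b| * L2) => x y.
have -> : a * f x + b * g x - (a * f y + b * g y) = a * (f x - f y) + b * (g x - g y) by ring.
apply: (le_trans (ler_normD _ _)); rewrite !normrM mulrDl -!mulrA.
by apply: lerD; apply: ler_wpM2l.
Qed.

Lemma lip1_blip F : (forall x y, F x - F y <= d x y) -> BLip0 d z (fun x => F x - F z).
Proof.
move=> hF.
have h : forall x y, `|(F x - F z) - (F y - F z)| <= 1 * d x y.
  move=> x y; rewrite mul1r ler_norml; apply/andP; split.
    by have := hF y x; rewrite d_sym; lra.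
  by have := hF x y; lra.
split; first by split; [rewrite subrr|exists 1].
exact: lip_le.
Qed.

Lemma Phi_shift F (c : R) : Phi d (fun x => F x - c) = Phi d F.
Proof. by apply: funext => p; rewrite /Phi; congr (_ / _); ring. Qed.

Lemma minl (x y : R) : x <= y -> Num.min x y = x. Proof. by move=> h; apply: min_l. Qed.
Lemma minr (x y : R) : y <= x -> Num.min x y = y. Proof. by move=> h; apply: min_r. Qed.
Lemma maxl (x y : R) : y <= x -> Num.max x y = x. Proof. by move=> h; apply: max_l. Qed.
Lemma maxr (x y : R) : x <= y -> Num.max x y = y. Proof. by move=> h; apply: max_r. Qed.

Lemma lip_min (A B : M -> R) : (forall x y, A x - A y <= d x y) ->
  (forall x y, B x - B y <= d x y) ->
  forall x y, Num.min (A x) (B x) - Num.min (A y) (B y) <= d x y.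
Proof.
move=> hA hB x y.
have m1 : Num.min (A x) (B x) <= A x by rewrite ge_min lexx.
have m2 : Num.min (A x) (B x) <= B x by rewrite ge_min lexx orbT.
case: (leP (A y) (B y)) => h.
  by have := hA x y; lra.
by have := hB x y; lra.
Qed.

Lemma lip_max (A B : M -> R) : (forall x y, A x - A y <= d x y) ->
  (forall x y, B x - B y <= d x y) ->
  forall x y, Num.max (A x) (B x) - Num.max (A y) (B y) <= d x y.
Proof.
move=> hA hB x y.
have m1 : A y <= Num.max (A y) (B y) by rewrite le_max lexx.
have m2 : B y <= Num.max (A y) (B y) by rewrite le_max lexx orbT.
case: (leP (A x) (B x)) => h.
  by have := hB x y; lra.
by have := hA x y; lra.
Qed.

Lemma extend (f : M -> R) (S : set M) (x0 u v : M) (g : R) :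
  (forall x y, f x - f y <= d x y) -> S x0 -> 0 <= g -> g <= 1 ->
  (forall x y, S x -> S y -> f x - f y + g * d u v <= d x u + d y v) ->
  exists F : M -> R, [/\ (forall x y, F x - F y <= d x y),
    (forall x, S x -> F x = f x) & g * d u v <= F v - F u].
Proof.
move=> hf Sx0 g0 g1 hc.
pose E := [set f x - d x u | x in S].
have ubE : forall y, S y -> ubound E (f y + d y v - g * d u v).
  by move=> y Sy _ [x Sx <-]; have := hc x y Sx Sy; lra.
pose a := sup E.
have a_ge : forall x, S x -> f x - d x u <= a.
  move=> x Sx; apply: ub_le_sup; last by exists x.
  by exists (f x0 + d x0 v - g * d u v); apply: ubE.
have a_le : forall y, S y -> a <= f y + d y v - g * d u v.
  by move=> y Sy; apply: ge_sup; [exists (f x0 - d x0 u), x0|apply: ubE].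
pose F := fun w => Num.min (a + d u w) (Num.max (f w) (a + g * d u v - d v w)).
exists F; split.
- apply: lip_min => [x y|]; first by have := d_tri u y x; rewrite (d_sym y x); lra.
  apply: lip_max => // x y; by have := d_tri v x y; lra.
- move=> x Sx; rewrite /F.
  have h1 : a + g * d u v - d v x <= f x by have := a_le x Sx; rewrite (d_sym v x); lra.
  rewrite (maxl h1); apply: minr.
  by have := a_ge x Sx; rewrite (d_sym u x); lra.
- have Fu : F u <= a by rewrite /F ge_min d_xx addr0 lexx.
  have Fv : a + g * d u v <= F v.
    rewrite /F le_min; apply/andP; split.
      have : g * d u v <= 1 * d u v by apply: ler_wpM2r => //; apply: d_ge0.
      lra.
    by rewrite le_max d_xx subr0 lexx orbT.
  lra.
Qed.

Lemma ind_setT : ind setT = (fun _ : T => 1 : R).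
Proof. apply: funext => p; rewrite /indf; case: (pselect (@setT T p)) => // h; by exfalso; apply: h. Qed.

Lemma mu_compl (mu : set T -> R) (B : set T) : is_ba mu -> mu B + mu (~` B) = mu setT.
Proof. by move=> hba; rewrite -(hba.1 B (~` B) (setICr B)) setUCr. Qed.

Lemma fwd : LD2P d z ->
  (forall mu : set (Mt M) -> R, is_ba mu -> optimal d z mu -> ba_norm mu = 1 ->
   forall gamma : R, 0 < gamma < 1 ->
   exists A : set (Mt M), gamma <= mu A /\
   exists f g : M -> R, BLip0 d z f /\ BLip0 d z g /\
   exists u v : M, u <> v /\
   (forall p, A p -> gamma <= Phi d f p /\ gamma <= Phi d g p) /\
   (forall x y, pi_set A x -> pi_set A y ->
      Num.max (f x - f y) (g y - g x) + gamma * d u v <= d x u + d y v)).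
Proof.
move=> LD mu hba [hpos hdn] hn1 g /andP[g0 g1].
have hmu : posba mu := conj hba hpos.
have mT : mu setT = 1 by rewrite -(ba_norm_pos hmu).
have PhiInt : forall f, Lip0 d z f -> Phi_star d mu f = Int mu (Phi d f).
  by move=> f hf; rewrite /Phi_star baint_Int //; exact: bnd_Phi.
have Int_cst : forall c : R, Int mu (fun _ => c) = c.
  move=> c.
  have -> : (fun _ : T => c) = (fun p => c * ind setT p + 0 * ind setT p).
    by rewrite ind_setT; apply: funext => p; ring.
  rewrite Int_lin; [|exact: hmu|exact: bnd_ind|exact: bnd_ind].
  by rewrite Int_ind // mT; ring.
have Int_mono : forall k h, bnd k -> bnd h -> (forall p, k p <= h p) -> Int mu k <= Int mu h.
  move=> k h bk bh hkh.
  have hp : forall p, 0 <= 1 * h p + -1 * k p by move=> p; have := hkh p; lra.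
  have := Int_ge0 hmu (bnd_lc 1 (-1) bh bk) hp.
  rewrite Int_lin //; lra.
have hdual : is_dual d z (Phi_star d mu).
  split.
    move=> f h a b hf hh; rewrite !PhiInt //; last exact: Lip0_lc.
    rewrite Phi_lin Int_lin //; exact: bnd_Phi.
  exists 1 => f hf; rewrite PhiInt // mul1r ler_norml; apply/andP; split.
    rewrite -[X in X <= _](Int_cst (- lipnorm d f)); apply: Int_mono.
    - exact: bnd_cst.
    - exact: bnd_Phi.
    - by move=> p; have := Phi_bound p hf; rewrite ler_norml => /andP[].
  rewrite -[X in _ <= X](Int_cst (lipnorm d f)); apply: Int_mono.
  - exact: bnd_Phi.
  - exact: bnd_cst.
  - by move=> p; have := Phi_bound p hf; rewrite ler_norml => /andP[].
have hdn1 : dualnorm d z (Phi_star d mu) = 1 by rewrite hdn.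
pose al := (1 - g) * (1 - g) / 4.
have al0 : 0 < al by rewrite /al; apply: divr_gt0 => //; nra.
have hdiam := LD _ hdual hdn1 al al0.
pose S := slice d z (Phi_star d mu) al.
pose D := [set r | exists f g, S f /\ S g /\ r = lipnorm d (fun x => f x - g x)].
have eD : diam_Lip d S = sup D by [].
rewrite eD in hdiam.
have neD : D !=set0.
  case: (pselect (exists r, D r)) => // ne; exfalso.
  have : D = set0 by rewrite predeqE => r; split => // hr; apply: ne; exists r.
  by move=> e; move: hdiam; rewrite e sup0 => /eqP; rewrite eq_sym pnatr_eq0.
have hlt : 1 + g < sup D by rewrite hdiam; lra.
have [r [f1 [f2 [s1 [s2 er]]]] hr] := sup_gt neD hlt.
pose h := fun x => f1 x - f2 x.
have hf1 := s1.1; have hf2 := s2.1.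
have neS : slopes h !=set0.
  case: (pselect (exists r, slopes h r)) => // ne; exfalso.
  have : slopes h = set0 by rewrite predeqE => r'; split => // hr'; apply: ne; exists r'.
  move=> e; move: hr; rewrite er /lipnorm -/(slopes h) e sup0; lra.
have hlt2 : 1 + g < sup (slopes h) by move: hr; rewrite er.
have [_ [x [y [nxy ->]]] hxy] := sup_gt neS hlt2.
have dxy := d_gt0 nxy.
rewrite ltr_pdivlMr // in hxy.
have [u [v [nuv huv]]] : exists u v, u <> v /\ (1 + g) * d u v < h u - h v.
  case: (lerP 0 (h x - h y)) => s.
    by exists x, y; split => //; rewrite ger0_norm in hxy.
  exists y, x; split; first by move=> e; apply: nxy.
  by rewrite ltr0_norm // in hxy; rewrite d_sym; lra.
have b1 := blip_bound hf1; have b2 := blip_bound hf2.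
have e1 : g * d u v < f1 u - f1 v.
  have := b2 u v; have := b1 u v; rewrite !ler_norml => /andP[_ ?] /andP[? _].
  move: huv; rewrite /h; nra.
have e2 : g * d u v < f2 v - f2 u.
  have := b2 u v; have := b1 u v; rewrite !ler_norml => /andP[_ ?] /andP[? _].
  move: huv; rewrite /h; nra.
have cheb : forall f, S f -> (1 - g) * mu [set p | Phi d f p < g] < al.
  move=> f [hf hs]; rewrite PhiInt in hs; last exact: hf.1.
  pose B := [set p | Phi d f p < g].
  have hk : forall p, Phi d f p <= g * ind B p + 1 * ind (~` B) p.
    move=> p; rewrite /indf; case: (pselect (B p)) => hb.
      case: (pselect ((~` B) p)) => hb'; first by exfalso; apply: hb'.
      rewrite mulr1 mulr0 addr0; exact: ltW.
    case: (pselect ((~` B) p)) => hb'; last by exfalso; apply: hb'.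
    rewrite mulr0 add0r mulr1.
    by have := Phi_bound p hf.1; rewrite ler_norml => /andP[_ /le_trans]; apply; exact: hf.2.
  have := Int_mono _ _ (bnd_Phi hf.1) (bnd_lc g 1 (bnd_ind B) (bnd_ind (~` B))) hk.
  rewrite Int_lin; [|exact: hmu|exact: bnd_ind|exact: bnd_ind].
  rewrite !Int_ind //.
  have := mu_compl B hba; rewrite mT.
  rewrite -/B; lra.
pose A := [set p | g <= Phi d f2 p /\ g <= Phi d f1 p].
have c1 := cheb _ s1; have c2 := cheb _ s2.
set B1 := [set p | Phi d f1 p < g] in c1.
set B2 := [set p | Phi d f2 p < g] in c2.
have sub : ~` A `<=` B2 `|` (B1 `\` B2).
  move=> p nA; case: (pselect (B2 p)) => hb2; first by left.
  have h2 : g <= Phi d f2 p.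
    by case: (ltP (Phi d f2 p) g) => // h2; exfalso; apply: hb2.
  right; split => //; rewrite /B1 /=.
  case: (ltP (Phi d f1 p) g) => // h1; exfalso; apply: nA; split => //.
have muA : g <= mu A.
  have c := mu_compl A hba; rewrite mT in c.
  have m1 := posba_mono hmu sub.
  have m2 : mu (B2 `|` (B1 `\` B2)) = mu B2 + mu (B1 `\` B2).
    by apply: hba.1; rewrite predeqE => p; split => // -[? []].
  have m3 : mu (B1 `\` B2) <= mu B1 by apply: posba_mono => // p [].
  have X : mu B1 + mu B2 <= 1 - g.
    have hg : 0 < 1 - g by lra.
    rewrite -(ler_pM2l hg).
    have sq : 0 <= (1 - g) * (1 - g) by apply: mulr_ge0; lra.
    rewrite /al in c1 c2; lra.
  lra.
exists A; split => //.
exists f2, f1; split; first exact: hf2.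
split; first exact: hf1.
exists u, v; split => //; split.
  by move=> p [].
move=> x1 y1 _ _.
have := b2 x1 u; have := b2 v y1; have := b1 y1 v; have := b1 u x1.
rewrite !ler_norml (d_sym v y1) (d_sym u x1).
move=> /andP[_ a1] /andP[_ a2] /andP[_ a3] /andP[_ a4].
case: (leP (f2 x1 - f2 y1) (f1 y1 - f1 x1)) => _; lra.
Qed.

Lemma blip0_0 : BLip0 d z (fun _ => 0).
Proof.
split; first by split => //; exists 0 => x y; rewrite subrr normr0 mul0r.
by apply: lip_le => // x y; rewrite subrr normr0 mul1r d_ge0.
Qed.

Lemma Phi0 : Phi d (fun _ : M => 0 : R) = (fun _ => 0).
Proof. by apply: funext => p; rewrite /Phi subrr mul0r. Qed.

Lemma bwd :
  (forall mu : set (Mt M) -> R, is_ba mu -> optimal d z mu -> ba_norm mu = 1 ->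
   forall gamma : R, 0 < gamma < 1 ->
   exists A : set (Mt M), gamma <= mu A /\
   exists f g : M -> R, BLip0 d z f /\ BLip0 d z g /\
   exists u v : M, u <> v /\
   (forall p, A p -> gamma <= Phi d f p /\ gamma <= Phi d g p) /\
   (forall x y, pi_set A x -> pi_set A y ->
      Num.max (f x - f y) (g y - g x) + gamma * d u v <= d x u + d y v)) ->
  LD2P d z.
Proof.
move=> H phi hdual hdn al al0.
have [hlinphi [C hC]] := hdual.
have L00 : Lip0 d z (fun _ => 0) := blip0_0.1.
have phi0 : phi (fun _ => 0) = 0.
  by move: (hlinphi _ _ 0 0 L00 L00); rewrite !mul0r !addr0 => h; exact: h.
pose E := [set `|phi f| | f in BLip0 d z].
have eE : dualnorm d z phi = sup E by [].
have ubE : has_ubound E.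
  exists `|C| => _ [f hf <-]; apply: (le_trans (hC f hf.1)).
  have l0 := lipnorm_ge0 hf.1.
  have : C * lipnorm d f <= `|C| * lipnorm d f by apply: ler_wpM2r => //; apply: ler_norm.
  have : `|C| * lipnorm d f <= `|C| * 1 by apply: ler_wpM2l => //; exact: hf.2.
  lra.
have phi_le1 : forall f, BLip0 d z f -> `|phi f| <= 1.
  by move=> f hf; rewrite -hdn eE; apply: ub_le_sup => //; exists f.
have phi_lip : forall f, Lip0 d z f -> phi f <= lipnorm d f.
  move=> f hf; apply/ler_addgt0Pr => e e0.
  have l0 := lipnorm_ge0 hf.
  pose L := lipnorm d f + e; have L0 : 0 < L by rewrite /L; lra.
  pose k := L^-1.
  have k0 : 0 < k by rewrite invr_gt0.
  have hg : BLip0 d z (fun x => k * f x + 0 * f x).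
    split; first exact: Lip0_lc.
    apply: lip_le => // x y.
    have -> : k * f x + 0 * f x - (k * f y + 0 * f y) = k * (f x - f y) by ring.
    rewrite normrM (gtr0_norm k0).
    have := lip_bound hf x y => hb.
    have hkl : k * lipnorm d f <= 1.
      by rewrite /k mulrC ler_pdivrMr // mul1r /L; lra.
    have dxy := d_ge0 x y.
    have := ler_wpM2l (ltW k0) hb; rewrite mulrA => h1.
    apply: (le_trans h1); apply: ler_wpM2r => //.
  have := phi_le1 _ hg; rewrite hlinphi // mul0r addr0 => /(le_trans (ler_norm _)) h1.
  have := ler_wpM2l (ltW L0) h1; rewrite mulrA /k mulfV ?gt_eqF // mul1r mulr1.
  by rewrite /L.
have noT : ~ (exists x y : M, x <> y) -> ~ (exists p : T, True).
  move=> nex [p _]; apply: nex; exists (sval p).1, (sval p).2; exact: (proj2_sig p).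
have lip_pp : forall f, Lip0 d z f -> lipnorm d f <= pp (Phi d f).
  move=> f hf; have bd := bnd_Phi hf.
  have key : forall x y, x <> y -> `|f x - f y| / d x y <= pp (Phi d f).
    move=> x y ne.
    have ne' : (y, x).1 <> (y, x).2 by move=> e; apply: ne.
    pose p := exist (fun q : M * M => q.1 <> q.2) (x, y) ne.
    pose q := exist (fun q : M * M => q.1 <> q.2) (y, x) ne'.
    have e : Phi d f q = - Phi d f p by rewrite /Phi /= d_sym; ring.
    have ep : `|f x - f y| / d x y = `|Phi d f p|.
      have di : 0 <= (d x y)^-1 by rewrite invr_ge0 d_ge0.
      by rewrite /Phi /= normrM (ger0_norm di).
    rewrite ep; have h1 := pp_ub p bd; have h2 := pp_ub q bd; rewrite e in h2.
    by case: (lerP 0 (Phi d f p)) => s; [rewrite ger0_norm | rewrite ltr0_norm]; lra.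
  case: (pselect (exists x y : M, x <> y)) => [[x [y ne]]|nex].
    apply: lip_le_set => //; have := key x y ne.
    by have := divr_ge0 (normr_ge0 (f x - f y)) (d_ge0 x y); lra.
  apply: lip_le_set; first by rewrite pp_empty //; exact: noT.
  by move=> x y ne; exfalso; apply: nex; exists x, y.
pose G0 := [set e | exists f, Lip0 d z f /\ e = (Phi d f, phi f)].
have vG0 : valid G0.
  split.
  - move=> h c c' [f [hf e1]] [g' [hg e2]]; case: e1 => e3 ->; case: e2 => e4 ->.
    have efg : f = g'.
      apply: funext => x; case: (pselect (x = z)) => [->|nxz]; first by rewrite hf.1 hg.1.
      pose p := exist (fun q : M * M => q.1 <> q.2) (x, z) nxz.
      have := congr1 (fun F => F p) (etrans (esym e3) e4).
      rewrite /Phi /= hf.1 hg.1 !subr0.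
      have dinv : (d x z)^-1 != 0 by rewrite invr_eq0 gt_eqF // d_gt0.
      by move/(mulIf dinv).
    by rewrite efg.
  - move=> a b h1 c1 h2 c2 [f [hf e1]] [g' [hg e2]]; case: e1 => -> ->; case: e2 => -> ->.
    exists (fun x => a * f x + b * g' x); split; first exact: Lip0_lc.
    by rewrite Phi_lin hlinphi.
  - move=> h c [f [hf e]]; case: e => -> ->; split; first exact: bnd_Phi.
    exact: le_trans (phi_lip _ hf) (lip_pp _ hf).
have G00 : G0 (fun _ => 0, 0).
  by exists (fun _ => 0); split => //; rewrite Phi0 phi0.
have [psi [plin ppp pext]] := HBext vG0 G00.
have pmono : forall g h, bnd g -> bnd h -> (forall p, g p <= h p) -> psi g <= psi h.
  move=> g h bg bh hgh; have := ppp _ (bnd_lc 1 (-1) bg bh); rewrite plin //.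
  have : pp (fun p => 1 * g p + -1 * h p) <= 0.
    by apply: pp_le => // p; have := hgh p; lra.
  lra.
have ps0 : psi (fun _ => 0) = 0 := psi0 plin.
pose mu := fun B : set T => psi (ind B).
have psi_phi : forall f, Lip0 d z f -> psi (Phi d f) = phi f.
  by move=> f hf; apply: pext; exists f.
have bnd1 : bnd (fun _ : T => 1 : R) := bnd_cst 1.
have psi1 : psi (fun _ => 1) = 1.
  apply/eqP; rewrite eq_le; apply/andP; split.
    by apply: (le_trans (ppp _ bnd1)); apply: pp_le.
  apply/ler_addgt0Pr => e e0.
  have neE : E !=set0 by exists `|phi (fun _ => 0)|, (fun _ => 0); first exact: blip0_0.
  have hlt : 1 - e < sup E by rewrite -eE hdn; lra.
  have [_ [f hf <-] hfe] := sup_gt neE hlt.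
  have hP : forall p, `|Phi d f p| <= 1.
    by move=> p; apply: (le_trans (Phi_bound p hf.1)); exact: hf.2.
  have u1 : psi (Phi d f) <= psi (fun _ => 1).
    apply: pmono; [exact: (bnd_Phi hf.1)|exact: bnd1|].
    by move=> p; have := hP p; rewrite ler_norml => /andP[].
  have u2 : - psi (Phi d f) <= psi (fun _ => 1).
    have := plin (-1) 0 _ _ (bnd_Phi hf.1) (bnd_Phi hf.1); rewrite mul0r addr0 mulN1r => <-.
    apply: pmono; [exact: (bnd_lc (-1) 0 (bnd_Phi hf.1) (bnd_Phi hf.1))|exact: bnd1|].
    by move=> p; have := hP p; rewrite ler_norml => /andP[]; lra.
  move: hfe; rewrite -(psi_phi _ hf.1); case: (lerP 0 (psi (Phi d f))) => s.
    by rewrite ger0_norm //; lra.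
  by rewrite ltr0_norm //; lra.
have mu_add : forall A B : set T, A `&` B = set0 -> mu (A `|` B) = mu A + mu B.
  move=> A B AB; rewrite /mu.
  have -> : ind (A `|` B) = (fun p => 1 * ind A p + 1 * ind B p).
    apply: funext => p; rewrite /indf.
    case: (pselect (A p)) => ha; case: (pselect (B p)) => hb;
      case: (pselect ((A `|` B) p)) => hab; rewrite /= ?mul1r ?addr0 ?add0r //;
      exfalso; first [ (have hh : (A `&` B) p by split); by rewrite AB in hh
                     | by apply: hab; left | by apply: hab; right | by case: hab ].
  by rewrite plin ?mul1r //; exact: bnd_ind.
have mu_ge0 : forall A, 0 <= mu A.
  move=> A; rewrite -ps0; apply: pmono; [exact: bnd_cst|exact: bnd_ind|].
  by move=> p; rewrite /indf; case: pselect.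
have mT : mu setT = 1 by rewrite /mu ind_setT psi1.
have mu_le1 : forall A, mu A <= 1.
  move=> A; rewrite -psi1; apply: pmono; [exact: bnd_ind|exact: bnd1|].
  by move=> p; rewrite /indf; case: pselect.
have hba : is_ba mu.
  split; first exact: mu_add.
  by exists 1 => A; rewrite ger0_norm.
have hmu : posba mu by split.
have hn : ba_norm mu = 1 by rewrite ba_norm_pos.
have Int_eq : forall g, bnd g -> Int mu g = psi g.
  by move=> g bg; apply: (Int_psi plin pmono hmu _ bg).
have PS : forall f, Lip0 d z f -> Phi_star d mu f = phi f.
  move=> f hf; rewrite /Phi_star baint_Int //; last exact: bnd_Phi.
  by rewrite Int_eq ?psi_phi //; exact: bnd_Phi.
have hopt : optimal d z mu.
  split => //; rewrite hn -hdn /dualnorm; congr sup; apply: eq_imagel => f hf.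
  by rewrite PS //; exact: hf.1.
pose S := slice d z phi al.
pose D := [set r | exists f g, S f /\ S g /\ r = lipnorm d (fun x => f x - g x)].
have eD : diam_Lip d S = sup D by [].
have ub2 : ubound D 2.
  move=> _ [f [g [[bf _] [[bg _] ->]]]]; apply: lip_le => // x y.
  have := blip_bound bf x y; have := blip_bound bg x y.
  have -> : f x - g x - (f y - g y) = (f x - f y) - (g x - g y) by ring.
  move=> h1 h2; apply: (le_trans (ler_normB _ _)); lra.
have lower : forall gm, 0 < gm -> gm < 1 -> 1 - al / 3 < gm -> exists2 r, D r & 2 * gm <= r.
  move=> gm gm0 gm1 gma.
  have hg : 0 < gm < 1 by rewrite gm0 gm1.
  have [A [hA [f [g [bf [bg [u [v [nuv [hAp hineq]]]]]]]]]] := H mu hba hopt hn gm hg.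
  have [p0 Ap0] : exists p, A p.
    case: (pselect (exists p, A p)) => // ne; exfalso.
    have eA : A = set0 by rewrite predeqE => p; split => // hp; apply: ne; exists p.
    move: hA; rewrite eA /mu.
    have -> : ind set0 = (fun _ => 0).
      by apply: funext => p; rewrite /indf; case: (pselect (@set0 T p)).
    rewrite ps0; lra.
  pose Sa := pi_set A.
  have Sx0 : Sa (sval p0).1.
    by exists (sval p0).2, p0 => //; left; case: (sval p0).
  have hf1 : forall x y, f x - f y <= d x y.
    by move=> x y; have := blip_bound bf x y; rewrite ler_norml => /andP[].
  have hg1 : forall x y, (fun x => - g x) x - (fun x => - g x) y <= d x y.
    by move=> x y /=; have := blip_bound bg y x; rewrite ler_norml d_sym => /andP[_]; lra.
  have condF : forall x y, Sa x -> Sa y -> f x - f y + gm * d u v <= d x u + d y v.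
    move=> x y Sx Sy; have := hineq x y Sx Sy.
    have : f x - f y <= Num.max (f x - f y) (g y - g x) by rewrite le_max lexx.
    lra.
  have condG : forall x y, Sa x -> Sa y ->
      (fun x => - g x) x - (fun x => - g x) y + gm * d u v <= d x u + d y v.
    move=> x y Sx Sy /=; have := hineq x y Sx Sy.
    have : g y - g x <= Num.max (f x - f y) (g y - g x) by rewrite le_max lexx orbT.
    lra.
  have [F [hF FS Fuv]] := extend hf1 Sx0 (ltW gm0) (ltW gm1) condF.
  have [H' [hH HS Huv]] := extend hg1 Sx0 (ltW gm0) (ltW gm1) condG.
  pose G := fun x => - H' x.
  have hG : forall x y, G x - G y <= d x y.
    by move=> x y; rewrite /G; have := hH y x; rewrite d_sym; lra.
  have GS : forall x, Sa x -> G x = g x by move=> x Sx; rewrite /G HS // opprK.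
  have Guv : gm * d u v <= G u - G v by rewrite /G; lra.
  pose F' := fun x => F x - F z; pose G' := fun x => G x - G z.
  have bF' : BLip0 d z F' := lip1_blip hF.
  have bG' : BLip0 d z G' := lip1_blip hG.
  have muc : mu A + mu (~` A) = 1 by rewrite -mT; exact: mu_compl.
  have inslice : forall (K k : M -> R), (forall x y, K x - K y <= d x y) ->
      (forall x, Sa x -> K x = k x) -> (forall p, A p -> gm <= Phi d k p) ->
      S (fun x => K x - K z).
    move=> K k hK KS hk; split; first exact: lip1_blip.
    have bK := lip1_blip hK.
    rewrite -(psi_phi _ bK.1) Phi_shift.
    have bPK : bnd (Phi d K) by rewrite -(Phi_shift K (K z)); exact: bnd_Phi bK.1.
    have hw : forall p, gm * ind A p + (-1) * ind (~` A) p <= Phi d K p.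
      move=> p; rewrite /indf; case: (pselect (A p)) => hp.
        case: (pselect ((~` A) p)) => hq; first by exfalso; apply: hq.
        rewrite /= mulr1 mulr0 addr0.
        have -> : Phi d K p = Phi d k p.
          case: p hp hq => [[x y] /= nxy] hp hq; rewrite /Phi /=.
          rewrite !KS //.
            by exists x; exists (exist _ (x, y) nxy) => //; right.
          by exists y; exists (exist _ (x, y) nxy) => //; left.
        exact: hk.
      case: (pselect ((~` A) p)) => hq; last by exfalso; apply: hq.
      rewrite /= mulr0 add0r mulr1.
      case: p {hp hq} => [[x y] /= nxy]; rewrite /Phi /=.
      have dxy := d_gt0 nxy.
      rewrite ler_pdivlMr // mulN1r; have := hK y x; rewrite d_sym; lra.
    have := pmono _ _ (bnd_lc gm (-1) (bnd_ind A) (bnd_ind (~` A))) bPK hw.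
    rewrite plin; [|exact: bnd_ind|exact: bnd_ind].
    rewrite -/(mu A) -/(mu (~` A)) => hge.
    have h1 : (1 + gm) * gm <= (1 + gm) * mu A by apply: ler_wpM2l => //; lra.
    have h2 : (1 - gm) * (gm + 2) < al / 3 * 3.
      have a1 : 1 - gm < al / 3 by lra.
      have a2 : gm + 2 < 3 by lra.
      nra.
    lra.
  have sF : S F' by apply: (inslice F f) => // p Ap; exact: (hAp p Ap).1.
  have sG : S G' by apply: (inslice G g) => // p Ap; exact: (hAp p Ap).2.
  exists (lipnorm d (fun x => G' x - F' x)); first by exists G', F'.
  have L0 : Lip0 d z (fun x => G' x - F' x).
    have := Lip0_lc 1 (-1) bG'.1 bF'.1 => [[h0 [L hL]]].
    split; first by move: h0; rewrite !mul1r mulN1r.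
    by exists L => x y; have := hL x y; rewrite !mul1r !mulN1r.
  apply: (@le_trans _ _ (`|(G' u - F' u) - (G' v - F' v)| / d u v)).
    have duv := d_gt0 nuv.
    rewrite ler_pdivlMr //; apply: (le_trans _ (ler_norm _)).
    rewrite /G' /F'; lra.
  apply: ub_le_sup; first exact: slopes_ub.
  by exists u, v.
have hub : has_ubound D by exists 2.
have ext_m : forall m : R, 0 <= m -> 1 - al / 3 <= m -> m < 1 ->
    exists2 r, D r & 1 + m <= r.
  move=> m m0 m1 mlt.
  have g0 : 0 < (1 + m) / 2 by lra.
  have g1 : (1 + m) / 2 < 1 by lra.
  have ga : 1 - al / 3 < (1 + m) / 2 by lra.
  have [r Dr hr] := lower _ g0 g1 ga.
  by exists r => //; lra.
have neD : D !=set0.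
  pose m := Num.max (1 - al / 3) 0.
  have m1 : 1 - al / 3 <= m by rewrite le_max lexx.
  have m0 : 0 <= m by rewrite le_max lexx orbT.
  have mlt : m < 1 by rewrite gt_max; apply/andP; split; lra.
  by have [r Dr _] := ext_m m m0 m1 mlt; exists r.
have hs1 : sup D <= 2 by apply: ge_sup.
have hs2 : 2 <= sup D.
  case: (lerP 2 (sup D)) => // hs.
  pose m := Num.max (Num.max (1 - al / 3) 0) (sup D / 2).
  have m1 : 1 - al / 3 <= m by rewrite !le_max lexx.
  have m0 : 0 <= m by rewrite !le_max lexx orbT.
  have m2 : sup D / 2 <= m by rewrite le_max lexx orbT.
  have mlt : m < 1 by rewrite !gt_max; apply/andP; split; [apply/andP; split|]; lra.
  have [r Dr hr] := ext_m m m0 m1 mlt.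
  have := ub_le_sup hub Dr; lra.
rewrite eD; apply/eqP; rewrite eq_le hs1 hs2 //.
Qed.
End Lip.

Unset Implicit Arguments.

Theorem proposition3p4 (R : realType) (M : Type) (d : M -> M -> R) (z : M)
  (hd : is_metric d) :
  LD2P d z <->
  (forall mu : set (Mt M) -> R, is_ba mu -> optimal d z mu -> ba_norm mu = 1 ->
   forall gamma : R, 0 < gamma < 1 ->
   exists A : set (Mt M), gamma <= mu A /\
   exists f g : M -> R, BLip0 d z f /\ BLip0 d z g /\
   exists u v : M, u <> v /\
   (forall p, A p -> gamma <= Phi d f p /\ gamma <= Phi d g p) /\
   (forall x y, pi_set A x -> pi_set A y ->
      Num.max (f x - f y) (g y - g x) + gamma * d u v <= d x u + d y v)).
Proof.
split; [exact: (fwd hd) | exact: (bwd hd)].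
Qed.
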